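(* Let $X$ be a compact Hausdorff space and $f:\mathbb N\to X$ a map with finite range. For $m\ge1$ let $R_m(f)=\{(f(lm),f(lm+1),\ldots,f(lm+m-1)):l\in\mathbb N\}$. Then the limit $\lim_{m\to\infty}\frac{\log|R_m(f)|}{m}$ exists and equals the anqie entropy of $f$.
   Context: $\mathbb N=\{0,1,2,\ldots\}$. For a compact Hausdorff space $X$ and a map $f:\mathbb N\to X$, let $X_f$ be the closure in $X^{\mathbb N}$ (product topology) of $\{(f(n),f(n+1),f(n+2),\ldots):n\in\mathbb N\}$, and let $B_f$ be the shift $(\omega_0,\omega_1,\ldots)\mapsto(\omega_1,\omega_2,\ldots)$ restricted to $X_f$. The anqie entropy of $f$ is the topological entropy $h(B_f)$. $|C|$ is the cardinality of a finite set $C$. *)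

(* Defs.v *)
From Stdlib Require Import Reals List Arith.
Import ListNotations.
Open Scope R_scope.

Record topology (X : Type) := {
  is_open : (X -> Prop) -> Prop;
  open_full : is_open (fun _ => True);
  open_inter : forall U V, is_open U -> is_open V -> is_open (fun x => U x /\ V x);
  open_union : forall F : (X -> Prop) -> Prop,
      (forall U, F U -> is_open U) -> is_open (fun x => exists U, F U /\ U x)
}.
Arguments is_open {X} t U.

Definition hausdorff {X : Type} (t : topology X) : Prop :=
  forall x y : X, x <> y -> exists U V, is_open t U /\ is_open t V /\ U x /\ V y /\
     forall z, ~ (U z /\ V z).

Definition compact_sp {X : Type} (t : topology X) : Prop :=
  forall F : (X -> Prop) -> Prop, (forall U, F U -> is_open t U) ->
    (forall x, exists U, F U /\ U x) ->
    exists L : list (X -> Prop), (forall U, In U L -> F U) /\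
      forall x, exists U, In U L /\ U x.

(** Open sets of the product topology on X^N (sequences nat -> X):
    unions of cylinders  {v | v i \in U_i for i < n}, U_i open. *)
Definition prod_open {X : Type} (t : topology X) (W : (nat -> X) -> Prop) : Prop :=
  forall w, W w -> exists (n : nat) (Us : nat -> X -> Prop),
    (forall i, (i < n)%nat -> is_open t (Us i)) /\
    (forall i, (i < n)%nat -> Us i (w i)) /\
    (forall v, (forall i, (i < n)%nat -> Us i (v i)) -> W v).

Definition shift {X : Type} (w : nat -> X) : nat -> X := fun k => w (S k).

(** X_f : closure in X^N of {(f n, f (n+1), ...) : n in N}. *)
Definition Xf {X : Type} (t : topology X) (f : nat -> X) (w : nat -> X) : Prop :=
  forall W, prod_open t W -> W w -> exists n : nat, W (fun k => f (n + k)%nat).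

(** Topological entropy (Adler–Konheim–McAndrew) of a map T restricted to
    an invariant compact set K of a space Y with open sets O. *)
Definition open_cover {Y : Type} (O : (Y -> Prop) -> Prop) (K : Y -> Prop)
  (C : (Y -> Prop) -> Prop) : Prop :=
  (forall U, C U -> O U) /\ (forall y, K y -> exists U, C U /\ U y).

(** Members of C v T^{-1}C v ... v T^{-(n-1)}C. *)
Definition join_n {Y : Type} (C : (Y -> Prop) -> Prop) (T : Y -> Y) (n : nat)
  (V : Y -> Prop) : Prop :=
  exists Us : nat -> Y -> Prop, (forall i, (i < n)%nat -> C (Us i)) /\
    forall y, V y <-> (forall i, (i < n)%nat -> Us i (Nat.iter i T y)).

Definition min_subcover_card {Y : Type} (K : Y -> Prop) (D : (Y -> Prop) -> Prop)
  (m : nat) : Prop :=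
  (exists L : list (Y -> Prop), length L = m /\ (forall V, In V L -> D V) /\
      forall y, K y -> exists V, In V L /\ V y) /\
  (forall L : list (Y -> Prop), (forall V, In V L -> D V) ->
      (forall y, K y -> exists V, In V L /\ V y) -> (m <= length L)%nat).

Definition cover_entropy {Y : Type} (K : Y -> Prop) (T : Y -> Y)
  (C : (Y -> Prop) -> Prop) (x : R) : Prop :=
  exists N : nat -> nat, (forall n, min_subcover_card K (join_n C T n) (N n)) /\
    Un_cv (fun n => ln (INR (N (S n))) / INR (S n)) x.

Definition top_entropy {Y : Type} (O : (Y -> Prop) -> Prop) (K : Y -> Prop)
  (T : Y -> Y) (h : R) : Prop :=
  is_lub (fun x => exists C, open_cover O K C /\ cover_entropy K T C x) h.

Definition anqie_entropy {X : Type} (t : topology X) (f : nat -> X) (h : R) : Prop :=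
  top_entropy (prod_open t) (Xf t f) shift h.

Definition Rm {X : Type} (f : nat -> X) (m : nat) (s : list X) : Prop :=
  exists l : nat, s = map (fun i => f (l * m + i)%nat) (seq 0 m).

Definition card_is {A : Type} (P : A -> Prop) (k : nat) : Prop :=
  exists L : list A, NoDup L /\ length L = k /\ forall a, P a <-> In a L.

(* Main.v *)
Require Import Defs.
From Stdlib Require Import Reals List Arith Lia Lra.
From Stdlib Require Import Classical ClassicalEpsilon.
Import ListNotations.

Lemma card_le_list {A} (P : A -> Prop) a l : card_is P a -> (forall x, P x -> In x l) -> (a <= length l)%nat.
Proof. intros [L [ND [<- H]]] Hl. apply NoDup_incl_length; auto. intros x Hx. apply Hl, H, Hx. Qed.

Lemma card_lower {A} (P : A -> Prop) a l : card_is P a -> NoDup l -> (forall x, In x l -> P x) -> (length l <= a)%nat.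
Proof. intros [L [ND [<- H]]] Hn Hl. apply NoDup_incl_length; auto. intros x Hx. apply H, Hl, Hx. Qed.

Definition dec_eq {A} : forall x y : A, {x = y} + {x <> y} := fun x y => excluded_middle_informative (x = y).

Lemma card_ex {A} (P : A -> Prop) l : (forall x, P x -> In x l) -> exists a, card_is P a.
Proof.
  intros H. exists (length (filter (fun x => if excluded_middle_informative (P x) then true else false) (nodup dec_eq l))).
  eexists; split; [|split; [reflexivity|]].
  - apply (NoDup_filter (fun x => if excluded_middle_informative (P x) then true else false)), NoDup_nodup.
  - intro x. rewrite filter_In, nodup_In. destruct (excluded_middle_informative (P x)); split; intuition; discriminate.
Qed.

Lemma card_pos {A} (P : A -> Prop) a x : P x -> card_is P a -> (1 <= a)%nat.
Proof. intros Px [L [_ [<- H]]]. apply H in Px. destruct L; simpl in *; [contradiction|lia]. Qed.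

Lemma pigeon {A B} (d : A) (R : A -> B -> Prop) (La : list A) (Lb : list B) :
  NoDup La -> (forall a, In a La -> exists b, In b Lb /\ R a b) ->
  (forall a a' b, R a b -> R a' b -> a = a') -> (length La <= length Lb)%nat.
Proof.
  intros ND Hc Hu.
  set (phi := fun b => match excluded_middle_informative (exists a, R a b) with
     | left H => proj1_sig (constructive_indefinite_description _ H) | right _ => d end).
  rewrite <- (length_map phi Lb). apply NoDup_incl_length; auto.
  intros a Ha. destruct (Hc a Ha) as [b [Hb Rab]]. apply in_map_iff. exists b; split; auto.
  unfold phi. destruct (excluded_middle_informative _) as [H|H].
  - destruct (constructive_indefinite_description _ H) as [a' Ha']; simpl. eapply Hu; eauto.
  - exfalso; eauto.
Qed.

Fixpoint tuples {A} (e : nat) (l : list A) : list (list A) :=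
  match e with 0 => [[]] | S e' => flat_map (fun x => map (cons x) (tuples e' l)) l end.

Lemma flat_cons_length {A} (T : list (list A)) l :
  length (flat_map (fun x => map (cons x) T) l) = (length l * length T)%nat.
Proof. induction l; simpl; auto. rewrite length_app, length_map, IHl. lia. Qed.

Lemma tuples_length {A} e (l : list A) : length (tuples e l) = (length l ^ e)%nat.
Proof. induction e; simpl; auto. rewrite flat_cons_length, IHe. lia. Qed.

Lemma tuples_in {A} e (l : list A) b : length b = e -> (forall x, In x b -> In x l) -> In b (tuples e l).
Proof.
  revert b; induction e; intros b Hb Hi; destruct b; simpl in *; try lia; auto.
  apply in_flat_map. exists a; split; auto. apply in_map, IHe; auto.
Qed.

Definition fac {X} (f : nat -> X) k n := map (fun i => f (k + i)%nat) (seq 0 n).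
Definition Lang {X} (f : nat -> X) n w := exists k, w = fac f k n.

Lemma fac_length {X} (f : nat -> X) k n : length (fac f k n) = n.
Proof. unfold fac. rewrite length_map, length_seq. auto. Qed.

Lemma fac_S {X} (f : nat -> X) k n : fac f k (S n) = f k :: fac f (S k) n.
Proof.
  unfold fac. simpl. rewrite <- seq_shift, map_map. f_equal; [f_equal; lia|].
  apply map_ext; intros; f_equal; lia.
Qed.

Lemma fac_0 {X} (f : nat -> X) k : fac f k 0 = [].
Proof. reflexivity. Qed.

Lemma fac_app {X} (f : nat -> X) k a b : fac f k (a + b) = fac f k a ++ fac f (k + a) b.
Proof.
  revert k; induction a; intros k.
  - simpl. rewrite Nat.add_0_r. reflexivity.
  - change (S a + b)%nat with (S (a + b)). rewrite !fac_S, IHa. replace (S k + a)%nat with (k + S a)%nat by lia. reflexivity.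
Qed.

Lemma nth_fac {X} (f : nat -> X) k n i d : (i < n)%nat -> nth i (fac f k n) d = f (k + i)%nat.
Proof.
  revert k i; induction n; intros k i Hi; [lia|]. rewrite fac_S.
  destruct i; simpl; [f_equal; lia|]. rewrite IHn by lia. f_equal; lia.
Qed.

Lemma fac_eq {X} (f : nat -> X) k k' n : (forall i, (i < n)%nat -> f (k + i)%nat = f (k' + i)%nat) -> fac f k n = fac f k' n.
Proof. intros H. unfold fac. apply map_ext_in. intros i Hi. apply in_seq in Hi. apply H. lia. Qed.

Lemma fac_eq_inv {X} (f : nat -> X) k k' n : fac f k n = fac f k' n -> forall i, (i < n)%nat -> f (k + i)%nat = f (k' + i)%nat.
Proof. intros H i Hi. rewrite <- (nth_fac f k n i (f 0%nat)), <- (nth_fac f k' n i (f 0%nat)) by auto. congruence. Qed.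

Lemma skipn_fac {X} (f : nat -> X) k T r : skipn r (fac f k T) = fac f (k + r) (T - r).
Proof.
  revert k T; induction r; intros k T. { cbn [skipn]. rewrite Nat.add_0_r, Nat.sub_0_r; auto. }
  destruct T. reflexivity. rewrite fac_S. cbn [skipn]. rewrite IHr. replace (S k + r)%nat with (k + S r)%nat by lia. reflexivity.
Qed.

Lemma firstn_fac {X} (f : nat -> X) k T n : (n <= T)%nat -> firstn n (fac f k T) = fac f k n.
Proof.
  revert k T; induction n; intros k T H. reflexivity.
  destruct T; [lia|]. rewrite !fac_S. cbn [firstn]. rewrite IHn by lia. auto.
Qed.

Lemma concat_blocks {X} (f : nat -> X) M l0 e :
  concat (map (fun j => fac f (j * M) M) (seq l0 e)) = fac f (l0 * M) (e * M).
Proof.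
  revert l0; induction e; intros l0. reflexivity.
  cbn [seq map concat]. rewrite IHe. change (S e * M)%nat with (M + e * M)%nat. rewrite fac_app. replace (S l0 * M)%nat with (l0 * M + M)%nat by lia. reflexivity.
Qed.

Lemma fac_in_tuples {X} (f : nat -> X) F k n : (forall m, In (f m) F) -> In (fac f k n) (tuples n F).
Proof. intros HF. apply tuples_in. apply fac_length. intros x Hx. unfold fac in Hx. apply in_map_iff in Hx. destruct Hx as [i [<- _]]. auto. Qed.

Lemma lang_cover {X} (f : nat -> X) M n RL : (1 <= M)%nat -> (forall s, Rm f M s -> In s RL) ->
  forall w, Lang f n w -> In w (map (fun p => firstn n (skipn (fst p) (concat (snd p))))
      (list_prod (seq 0 M) (tuples (n / M + 2) RL))).
Proof.
  intros HM HR w [k ->]. apply in_map_iff.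
  exists (k mod M, map (fun j => fac f (j * M) M) (seq (k / M) (n / M + 2))). split.
  - simpl. rewrite concat_blocks, skipn_fac, firstn_fac.
    + f_equal. pose proof (Nat.div_mod k M ltac:(lia)). lia.
    + pose proof (Nat.div_mod n M ltac:(lia)). pose proof (Nat.mod_upper_bound n M ltac:(lia)).
      pose proof (Nat.mod_upper_bound k M ltac:(lia)). nia.
  - apply in_prod. apply in_seq. pose proof (Nat.mod_upper_bound k M ltac:(lia)). lia.
    apply tuples_in. rewrite length_map, length_seq; auto.
    intros x Hx. apply in_map_iff in Hx. destruct Hx as [j [<- _]]. apply HR. exists j. reflexivity.
Qed.

Lemma lang_count {X} (f : nat -> X) M n a b : (1 <= M)%nat -> card_is (Lang f n) a -> card_is (Rm f M) b ->
  (a <= M * b ^ (n / M + 2))%nat.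
Proof.
  intros HM Ha Hb. destruct Hb as [RL [ND [<- HRL]]].
  eapply Nat.le_trans. refine (card_le_list _ _ _ Ha (lang_cover f M n RL HM _)). intros s Hs; apply HRL, Hs.
  rewrite length_map, length_prod, length_seq, tuples_length. lia.
Qed.

Lemma rm_lang {X} (f : nat -> X) M s : Rm f M s -> Lang f M s.
Proof. intros [l ->]. exists (l * M)%nat. reflexivity. Qed.

Lemma iso_open {X} (tX : topology X) (HH : hausdorff tX) (F : list X) (x : X) :
  exists U, is_open tX U /\ U x /\ forall a, In a F -> U a -> a = x.
Proof.
  induction F as [|b F IH].
  - exists (fun _ => True). split; [apply open_full|]. split; auto. intros a [].
  - destruct IH as [U [HU [Ux HUF]]]. destruct (classic (b = x)) as [Hb|Hb].
    + exists U. split; auto. split; auto. intros a [<-|Ha] HUa; auto.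
    + destruct (HH x b (fun e => Hb (eq_sym e))) as [U1 [V1 [HU1 [HV1 [U1x [V1b Hd]]]]]].
      exists (fun z => U z /\ U1 z). split; [apply open_inter; auto|]. split; auto.
      intros a [Hba|Ha] [HUa HU1a]; [subst a; exfalso; apply (Hd b); auto | auto].
Qed.

Lemma iter_shift {X} i (y : nat -> X) j : Nat.iter i shift y j = y (i + j)%nat.
Proof. revert j; induction i; intros j; simpl; auto. unfold shift. rewrite IHi. f_equal. lia. Qed.

Lemma Xf_lang {X} (tX : topology X) (f : nat -> X) (F : list X) (Uf : X -> X -> Prop)
  (HU : forall x, is_open tX (Uf x) /\ Uf x x /\ forall a, In a F -> Uf x a -> a = x)
  (HF : forall m, In (f m) F) w : Xf tX f w -> forall n, exists k, forall i, (i < n)%nat -> w i = f (k + i)%nat.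
Proof.
  intros Hw n. destruct (Hw (fun v => forall i, (i < n)%nat -> Uf (w i) (v i))) as [k Hk].
  - intros v Hv. exists n, (fun i => Uf (w i)). split; [intros i _; apply HU|]. split; auto.
  - intros i _. apply HU.
  - exists k. intros i Hi. symmetry. apply (HU (w i)); auto.
Qed.

Lemma lang_Xf {X} (tX : topology X) (f : nat -> X) w :
  (forall n, exists k, forall i, (i < n)%nat -> w i = f (k + i)%nat) -> Xf tX f w.
Proof.
  intros Hl W HW Ww. destruct (HW w Ww) as [n [Us [_ [HUs Himp]]]]. destruct (Hl n) as [k Hk].
  exists k. apply Himp. intros i Hi. rewrite <- Hk; auto.
Qed.

Definition good {X} (C : ((nat -> X) -> Prop) -> Prop) (f : nat -> X) pos K :=
  exists V, C V /\ forall v : nat -> X, (forall i, (i < K)%nat -> v i = f (pos + i)%nat) -> V v.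

Lemma good_mono {X} C (f : nat -> X) pos K K' : (K <= K')%nat -> good C f pos K -> good C f pos K'.
Proof. intros HK [V [HV HVv]]. exists V. split; auto. intros v Hv. apply HVv. intros i Hi; apply Hv; lia. Qed.

Lemma finite_max {A} (Q : A -> nat -> Prop) (F : list A) :
  (forall a K K', (K <= K')%nat -> Q a K -> Q a K') -> (forall a, In a F -> exists K, Q a K) ->
  exists K, forall a, In a F -> Q a K.
Proof.
  intros Hm. induction F as [|b F IH]; intros H.
  - exists 0%nat. intros a [].
  - destruct IH as [K1 HK1]. intros a Ha; apply H; simpl; auto.
    destruct (H b (or_introl eq_refl)) as [K2 HK2]. exists (K1 + K2)%nat.
    intros a [<-|Ha]. apply (Hm _ K2); auto; lia. apply (Hm _ K1); auto; lia.
Qed.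

Definition upd {X} (p : nat -> X) m (a : X) := fun i => if Nat.eq_dec i m then a else p i.

Definition nextf {X} (G : (nat -> X) -> nat -> Prop) (x0 : X) p m :=
  match excluded_middle_informative (exists a, G (upd p m a) (S m)) with
  | left H => proj1_sig (constructive_indefinite_description _ H) | right _ => x0 end.

Fixpoint path {X} G (x0 : X) (p0 : nat -> X) m :=
  match m with 0 => p0 | S m' => upd (path G x0 p0 m') m' (nextf G x0 (path G x0 p0 m') m') end.

Lemma path_G {X} G (x0 : X) p0 : (forall p m, G p m -> exists a, G (upd p m a) (S m)) -> G p0 0%nat ->
  forall m, G (path G x0 p0 m) m.
Proof.
  intros Hs H0 m. induction m; simpl; auto. unfold nextf.
  destruct (excluded_middle_informative _) as [H|H].
  - destruct (constructive_indefinite_description _ H); simpl; auto.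
  - exfalso. apply H. apply Hs. auto.
Qed.

Lemma path_stable {X} G (x0 : X) p0 m i : (i < m)%nat -> path G x0 p0 m i = path G x0 p0 (S i) i.
Proof.
  induction m; intros Hi; [lia|]. destruct (Nat.eq_dec i m) as [->|Hne]; auto.
  simpl. unfold upd at 1. destruct (Nat.eq_dec i m); [lia|]. apply IHm. lia.
Qed.

Lemma konig {X} (tX : topology X) (f : nat -> X) (F : list X) (HF : forall m, In (f m) F)
  (C : ((nat -> X) -> Prop) -> Prop) (HCo : forall U, C U -> prod_open tX U)
  (HCc : forall y, Xf tX f y -> exists U, C U /\ U y) :
  exists K, forall pos, good C f pos K.
Proof.
  apply NNPP. intros Hn.
  set (G := fun (p : nat -> X) m => forall K, (m <= K)%nat -> exists pos,
       (forall i, (i < m)%nat -> f (pos + i)%nat = p i) /\ ~ good C f pos K).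
  assert (G0 : G f 0%nat).
  { intros K _. apply NNPP. intros H. apply Hn. exists K. intros pos. apply NNPP. intros Hg.
    apply H. exists pos. split; auto. intros; lia. }
  assert (Gs : forall p m, G p m -> exists a, G (upd p m a) (S m)).
  { intros p m Gp. apply NNPP. intros Hna.
    destruct (finite_max (fun a K => forall pos, (forall i, (i < S m)%nat -> f (pos + i)%nat = upd p m a i) -> good C f pos K) F)
      as [K HK].
    - intros a K K' HKK' HQ pos Hpos. eapply good_mono; eauto.
    - intros a _. apply NNPP. intros Hne. apply Hna. exists a. intros K HK. apply NNPP. intros Hne2.
      apply Hne. exists K. intros pos Hpos. apply NNPP. intros Hg. apply Hne2. exists pos. split; auto.
    - destruct (Gp (K + S m)%nat ltac:(lia)) as [pos [Hm Hng]]. apply Hng.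
      apply (good_mono C f pos K); [lia|]. apply (HK (f (pos + m)%nat) (HF _)).
      intros i Hi. unfold upd. destruct (Nat.eq_dec i m) as [->|Hne]; auto. apply Hm. lia. }
  set (w := fun i => path G (f 0%nat) f (S i) i).
  assert (HG := path_G G (f 0%nat) f Gs G0).
  assert (Hw : forall n i, (i < n)%nat -> path G (f 0%nat) f n i = w i).
  { intros n i Hi. unfold w. apply path_stable. auto. }
  assert (Xw : Xf tX f w).
  { apply lang_Xf. intros n. destruct (HG n n (le_n _)) as [pos [Hp _]]. exists pos.
    intros i Hi. rewrite <- (Hw n i Hi), Hp; auto. }
  destruct (HCc w Xw) as [U [CU Uw]]. destruct (HCo U CU w Uw) as [n [Us [_ [HUs Himp]]]].
  destruct (HG n n (le_n _)) as [pos [Hp Hng]]. apply Hng. exists U. split; auto.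
  intros v Hv. apply Himp. intros i Hi. rewrite Hv, Hp, Hw; auto.
Qed.

Lemma positions {X} (f : nat -> X) m Lw : (forall w, In w Lw -> Lang f m w) ->
  exists Pl, length Pl = length Lw /\ forall w, In w Lw -> exists q, In q Pl /\ w = fac f q m.
Proof.
  induction Lw as [|w Lw IH]; intros H.
  - exists []. split; auto. intros w [].
  - destruct IH as [Pl [HPl HPw]]. intros; apply H; simpl; auto.
    destruct (H w (or_introl eq_refl)) as [k Hk]. exists (k :: Pl). split; simpl; auto.
    intros w' [<-|Hw']. exists k; auto. destruct (HPw w' Hw') as [q [Hq ->]]. exists q; auto.
Qed.

Lemma orbit_Xf {X} (tX : topology X) (f : nat -> X) k : Xf tX f (fun j => f (k + j)%nat).
Proof. apply lang_Xf. intros n. exists k. auto. Qed.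

Lemma min_pos {X} (tX : topology X) (f : nat -> X) D N : min_subcover_card (Xf tX f) D N -> (1 <= N)%nat.
Proof.
  intros [[L [HL [_ Hc]]] _]. destruct (Hc _ (orbit_Xf tX f 0)) as [V [HV _]].
  subst N. destruct L; simpl in *; [contradiction|lia].
Qed.

Lemma C0_min {X} (tX : topology X) (f : nat -> X) (F : list X) (Uf : X -> X -> Prop)
  (HU : forall x, is_open tX (Uf x) /\ Uf x x /\ forall a, In a F -> Uf x a -> a = x)
  (HF : forall m, In (f m) F) n c :
  card_is (Lang f n) c ->
  min_subcover_card (Xf tX f) (join_n (fun V => exists a, In a F /\ V = (fun v => Uf a (v 0%nat))) shift n) c.
Proof.
  intros Hc. destruct Hc as [Lw [ND [Hlen HLw]]]. split.
  - exists (map (fun w => fun y => forall i, (i < n)%nat -> Uf (nth i w (f 0%nat)) (y i)) Lw).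
    split; [rewrite length_map; auto|]. split.
    + intros V HV. apply in_map_iff in HV. destruct HV as [w [<- Hw]].
      apply HLw in Hw. destruct Hw as [k ->].
      exists (fun i v => Uf (nth i (fac f k n) (f 0%nat)) (v 0%nat)). split.
      * intros i Hi. exists (nth i (fac f k n) (f 0%nat)). split; auto. rewrite nth_fac; auto.
      * intros y. split; intros H i Hi; specialize (H i Hi); rewrite iter_shift, Nat.add_0_r in *; auto.
    + intros y Hy. destruct (Xf_lang tX f F Uf HU HF y Hy n) as [k Hk].
      exists (fun y => forall i, (i < n)%nat -> Uf (nth i (fac f k n) (f 0%nat)) (y i)). split.
      * apply (in_map (fun (w : list X) (y : nat -> X) => forall i, (i < n)%nat -> Uf (nth i w (f 0%nat)) (y i))). apply HLw. exists k; auto.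
      * intros i Hi. rewrite nth_fac, <- Hk by auto. apply HU.
  - intros L HD Hcov. subst c.
    apply (pigeon [] (fun w V => In V L /\ exists k, w = fac f k n /\ V (fun j => f (k + j)%nat)) Lw L ND).
    + intros w Hw. apply HLw in Hw. destruct Hw as [k ->].
      destruct (Hcov _ (orbit_Xf tX f k)) as [V [HV HVy]]. exists V. split; auto. split; auto. exists k; auto.
    + intros w w' V [HV [k [-> Hk]]] [_ [k' [-> Hk']]].
      destruct (HD V HV) as [Us [HC Hiff]]. pose proof (proj1 (Hiff _) Hk) as Hk1. pose proof (proj1 (Hiff _) Hk') as Hk1'. clear Hk Hk'. rename Hk1 into Hk. rename Hk1' into Hk'.
      apply fac_eq. intros i Hi. destruct (HC i Hi) as [a [Ha HUs]].
      specialize (Hk i Hi). specialize (Hk' i Hi). rewrite HUs, iter_shift in Hk, Hk'.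
      rewrite !Nat.add_0_r in *. transitivity a; [|symmetry]; apply (HU a); auto.
Qed.

Lemma C_upper {X} (tX : topology X) (f : nat -> X) (F : list X) (Uf : X -> X -> Prop)
  (HU : forall x, is_open tX (Uf x) /\ Uf x x /\ forall a, In a F -> Uf x a -> a = x)
  (HF : forall m, In (f m) F) C K (HK : forall pos, good C f pos K) n c N :
  card_is (Lang f (n + K)) c -> min_subcover_card (Xf tX f) (join_n C shift n) N -> (N <= c)%nat.
Proof.
  intros [Lw [ND [Hlen HLw]]] [_ Hmin].
  destruct (positions f (n + K) Lw) as [Pl [HPl HPw]]. { intros w Hw; apply HLw; auto. }
  set (Uc := fun pos => proj1_sig (constructive_indefinite_description _ (HK pos))).
  assert (HUc : forall pos, C (Uc pos) /\ forall v : nat -> X, (forall i, (i < K)%nat -> v i = f (pos + i)%nat) -> Uc pos v).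
  { intros pos. unfold Uc. destruct (constructive_indefinite_description _ (HK pos)); simpl; auto. }
  rewrite <- Hlen, <- HPl, <- (length_map (fun q => fun y => forall i, (i < n)%nat -> Uc (q + i)%nat (Nat.iter i shift y)) Pl).
  apply Hmin.
  - intros V HV. apply in_map_iff in HV. destruct HV as [q [<- _]].
    exists (fun i => Uc (q + i)%nat). split. intros i _; apply HUc. intros y; split; auto.
  - intros y Hy. destruct (Xf_lang tX f F Uf HU HF y Hy (n + K)) as [k Hk].
    destruct (HPw (fac f k (n + K))) as [q [Hq Hqe]]. apply HLw. exists k; auto.
    exists (fun y => forall i, (i < n)%nat -> Uc (q + i)%nat (Nat.iter i shift y)). split.
    + apply (in_map (fun q y => forall i, (i < n)%nat -> Uc (q + i)%nat (Nat.iter i shift y))); auto.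
    + intros i Hi. apply HUc. intros j Hj. rewrite iter_shift, Hk by lia.
      rewrite (fac_eq_inv f k q (n + K) Hqe (i + j)) by lia. f_equal. lia.
Qed.
Open Scope R_scope.

Lemma ln_le' x y : 0 < x -> x <= y -> ln x <= ln y.
Proof. intros Hx [H|H]. apply Rlt_le, ln_increasing; auto. subst; lra. Qed.

Lemma ln_nonneg (a : nat) : (1 <= a)%nat -> 0 <= ln (INR a).
Proof. intros H. rewrite <- ln_1. apply ln_le'. lra. apply le_INR in H. simpl in H. auto. Qed.

Lemma ln_bound (a b M n : nat) : (1 <= a)%nat -> (1 <= b)%nat -> (1 <= M)%nat -> (a <= M * b ^ (n / M + 2))%nat ->
  ln (INR a) <= INR n * (ln (INR b) / INR M) + (ln (INR M) + 2 * ln (INR b)).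
Proof.
  intros Ha Hb HM Hle.
  assert (HMp : 0 < INR M) by (apply lt_0_INR; lia).
  assert (Hbp : 0 < INR b) by (apply lt_0_INR; lia).
  assert (HL : 0 <= ln (INR b)) by (apply ln_nonneg; auto).
  eapply Rle_trans. apply ln_le'. apply lt_0_INR; lia. apply le_INR, Hle.
  rewrite mult_INR, pow_INR, ln_mult, ln_pow, plus_INR by (auto; apply pow_lt; auto).
  assert (Hq : INR (n / M) * INR M <= INR n).
  { rewrite <- mult_INR. apply le_INR. rewrite Nat.mul_comm. apply Nat.Div0.mul_div_le. }
  set (L := ln (INR b)) in *. set (t := L / INR M).
  assert (Ht : 0 <= t) by (unfold t; apply Rmult_le_pos; auto; apply Rlt_le, Rinv_0_lt_compat; auto).
  assert (HLt : L = t * INR M) by (unfold t; field; apply Rgt_not_eq; lra).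
  rewrite HLt. replace (INR 2) with 2 by (simpl; lra). clearbody t. clear HLt. nra.
Qed.

Lemma small (D eps : R) : 0 < eps -> exists N, forall n, (N <= n)%nat -> D / INR (S n) < eps.
Proof.
  intros He. destruct (INR_unbounded (Rabs D / eps)) as [N HN]. exists N. intros n Hn.
  assert (HS : INR N <= INR n) by (apply le_INR; auto).
  assert (HSn : INR (S n) = INR n + 1) by (rewrite S_INR; auto).
  assert (Hp : 0 < INR (S n)) by (apply lt_0_INR; lia).
  set (a := Rabs D / eps) in *. assert (Ha : Rabs D = a * eps) by (unfold a; field; apply Rgt_not_eq; lra).
  assert (HD : D <= Rabs D) by apply Rle_abs.
  apply (Rmult_lt_reg_r (INR (S n))); auto. unfold Rdiv. rewrite Rmult_assoc, Rinv_l, Rmult_1_r by lra.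
  nra.
Qed.

Lemma lim_le (u : nat -> R) x c D : Un_cv u x -> (forall n, u n <= c + D / INR (S n)) -> x <= c.
Proof.
  intros Hu Hb. destruct (Rle_or_lt x c) as [H|H]; auto. exfalso.
  destruct (Hu ((x - c) / 2)) as [N1 HN1]. lra.
  destruct (small D ((x - c) / 2)) as [N2 HN2]. lra.
  specialize (HN1 (N1 + N2)%nat ltac:(lia)). specialize (HN2 (N1 + N2)%nat ltac:(lia)).
  specialize (Hb (N1 + N2)%nat). unfold R_dist in HN1. apply Rabs_def2 in HN1. lra.
Qed.

Lemma card_sub {A} (P Q : A -> Prop) a b : card_is P a -> card_is Q b -> (forall x, P x -> Q x) -> (a <= b)%nat.
Proof. intros HP [L [_ [<- HL]]] H. apply (card_le_list _ _ _ HP). intros x Hx. apply HL, H, Hx. Qed.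

Theorem lemma6p2 (X : Type) (tX : topology X) (HH : hausdorff tX) (HC : compact_sp tX)
  (f : nat -> X) (Hfin : exists L : list X, forall n, In (f n) L) :
  exists h : R, anqie_entropy tX f h /\
    exists r : nat -> nat, (forall m, card_is (Rm f (S m)) (r m)) /\
      Un_cv (fun m => ln (INR (r m)) / INR (S m)) h.
Proof.
  destruct Hfin as [F HF].
  assert (iso : forall x, exists U, is_open tX U /\ U x /\ forall a, In a F -> U a -> a = x)
    by (intro; apply iso_open; auto).
  set (Uf := fun x => proj1_sig (constructive_indefinite_description _ (iso x))).
  assert (HU : forall x, is_open tX (Uf x) /\ Uf x x /\ forall a, In a F -> Uf x a -> a = x).
  { intro x. unfold Uf. destruct (constructive_indefinite_description _ (iso x)); simpl; auto. }
  clearbody Uf.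
  assert (Hell : forall n, exists a, card_is (Lang f n) a).
  { intro n. apply (card_ex _ (tuples n F)). intros w [k ->]. apply fac_in_tuples; auto. }
  set (ell := fun n => proj1_sig (constructive_indefinite_description _ (Hell n))).
  assert (Hl : forall n, card_is (Lang f n) (ell n)).
  { intro n. unfold ell. destruct (constructive_indefinite_description _ (Hell n)); simpl; auto. }
  clearbody ell.
  assert (Hrho : forall m, exists a, card_is (Rm f (S m)) a).
  { intro m. apply (card_ex _ (tuples (S m) F)). intros w Hw. apply rm_lang in Hw. destruct Hw as [k ->].
    apply fac_in_tuples; auto. }
  set (rho := fun n => proj1_sig (constructive_indefinite_description _ (Hrho n))).
  assert (Hr : forall n, card_is (Rm f (S n)) (rho n)).
  { intro n. unfold rho. destruct (constructive_indefinite_description _ (Hrho n)); simpl; auto. }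
  clearbody rho.
  assert (ell_pos : forall n, (1 <= ell n)%nat).
  { intro n. apply (card_pos _ _ (fac f 0 n) (ex_intro _ 0%nat eq_refl) (Hl n)). }
  assert (rho_pos : forall m, (1 <= rho m)%nat).
  { intro m. apply (card_pos _ _ (fac f (0 * S m) (S m)) (ex_intro _ 0%nat eq_refl) (Hr m)). }
  assert (rho_le : forall m, (rho m <= ell (S m))%nat).
  { intro m. apply (card_sub _ _ _ _ (Hr m) (Hl (S m))). apply rm_lang. }
  set (c := fun m => ln (INR (rho m)) / INR (S m)).
  set (D := fun m => ln (INR (S m)) + 2 * ln (INR (rho m))).
  assert (Lb : forall m n, ln (INR (ell n)) <= INR n * c m + D m).
  { intros m n. apply ln_bound; auto. lia. apply (lang_count f); auto. lia. }
  assert (c_nn : forall m, 0 <= c m).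
  { intro m. unfold c. apply Rmult_le_pos. apply ln_nonneg; auto. apply Rlt_le, Rinv_0_lt_compat, lt_0_INR; lia. }
  destruct (completeness (fun x => exists m, x = - c m)) as [s [Hs1 Hs2]].
  { exists 0. intros x [m ->]. specialize (c_nn m). lra. }
  { exists (- c 0%nat). exists 0%nat; auto. }
  set (h := - s).
  assert (H1 : forall m, h <= c m).
  { intro m. assert (- c m <= s) by (apply Hs1; exists m; auto). unfold h; lra. }
  assert (H2 : forall y, (forall m, y <= c m) -> y <= h).
  { intros y Hy. assert (s <= - y). { apply Hs2. intros x [m ->]. specialize (Hy m). lra. } unfold h; lra. }
  assert (Hinf : forall e, 0 < e -> exists m, c m < h + e).
  { intros e He. apply NNPP. intros Hn. assert (h + e <= h). apply H2. intro m.
    apply Rnot_lt_le. intro Hlt. apply Hn. exists m; auto. lra. }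
  assert (a_conv : Un_cv (fun n => ln (INR (ell (S n))) / INR (S n)) h).
  { intros e He. destruct (Hinf (e / 2)) as [m Hm]. lra.
    destruct (small (D m) (e / 2)) as [N HN]. lra. exists N. intros n Hn. unfold R_dist.
    specialize (HN n Hn). specialize (Lb m (S n)).
    assert (HSp : 0 < INR (S n)) by (apply lt_0_INR; lia).
    assert (Hup : ln (INR (ell (S n))) / INR (S n) <= c m + D m / INR (S n)).
    { apply (Rmult_le_reg_r (INR (S n))); auto. unfold Rdiv.
      rewrite Rmult_plus_distr_r, !Rmult_assoc, Rinv_l, !Rmult_1_r by lra. lra. }
    assert (Hlo : c n <= ln (INR (ell (S n))) / INR (S n)).
    { unfold c, Rdiv. apply Rmult_le_compat_r. apply Rlt_le, Rinv_0_lt_compat; auto.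
      apply ln_le'. apply lt_0_INR. specialize (rho_pos n); lia. apply le_INR; auto. }
    specialize (H1 n). apply Rabs_def1; lra. }
  exists h. split.
  - unfold anqie_entropy, top_entropy. split.
    + intros x [C [[HCo HCc] [N [HN Hcv]]]]. destruct (konig tX f F HF C HCo HCc) as [K HK].
      assert (NB : forall n, (N n <= ell (n + K))%nat).
      { intro n. apply (C_upper tX f F Uf HU HF C K HK n (ell (n + K)%nat) (N n) (Hl _) (HN n)). }
      apply H2. intro m. apply (lim_le _ x (c m) (INR K * c m + D m) Hcv). intro n.
      assert (HSp : 0 < INR (S n)) by (apply lt_0_INR; lia).
      assert (HNp : (1 <= N (S n))%nat) by (apply (min_pos tX f _ _ (HN (S n)))).
      assert (Hle : ln (INR (N (S n))) <= ln (INR (ell (S n + K)%nat))).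
      { apply ln_le'. apply lt_0_INR; lia. apply le_INR; auto. }
      specialize (Lb m (S n + K)%nat). rewrite plus_INR in Lb.
      apply (Rmult_le_reg_r (INR (S n))); auto. unfold Rdiv.
      rewrite Rmult_plus_distr_r, !Rmult_assoc, Rinv_l, !Rmult_1_r by lra. nra.
    + intros b Hb. apply Hb. exists (fun V => exists a, In a F /\ V = (fun v => Uf a (v 0%nat))). split.
      * split.
        -- intros U [a [_ ->]] w Hw. exists 1%nat, (fun _ => Uf a). split; [intros; apply HU|]. split.
           ++ intros i Hi. replace i with 0%nat by lia. auto.
           ++ intros v Hv. apply Hv. lia.
        -- intros y Hy. destruct (Xf_lang tX f F Uf HU HF y Hy 1) as [k Hk].
           exists (fun v => Uf (y 0%nat) (v 0%nat)). split.
           ++ exists (y 0%nat). split; auto. rewrite Hk by lia. auto.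
           ++ apply HU.
      * exists ell. split; [intro n; apply C0_min; auto | exact a_conv].
  - exists rho. split; auto.
    intros e He. destruct (a_conv e He) as [N HN]. exists N. intros n Hn. specialize (HN n Hn).
    unfold R_dist in *. apply Rabs_def2 in HN.
    assert (Hlo : c n <= ln (INR (ell (S n))) / INR (S n)).
    { unfold c, Rdiv. apply Rmult_le_compat_r. apply Rlt_le, Rinv_0_lt_compat, lt_0_INR; lia.
      apply ln_le'. apply lt_0_INR. specialize (rho_pos n); lia. apply le_INR; auto. }
    specialize (H1 n). fold (c n). apply Rabs_def1; lra.
Qed.
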